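(* Let $(\Omega,\mathcal{F},\mathbf{P})$ be a probability space and $\theta\colon\Omega\to\Omega$ an ergodic automorphism. Let $A$ be an $N\times N$ matrix with all entries positive, and let $D(\omega)=\mathrm{diag}(d_1(\omega),\dots,d_N(\omega))$ be measurable with $d_i(\omega)>0$ and $\ln^{+}(\max_i d_i(\cdot))\in L_1(\Omega,\mathcal{F},\mathbf{P})$; put $S(\omega)=AD(\omega)$. Suppose $\Omega_0\in\mathcal{F}$ with $\theta(\Omega_0)=\Omega_0$, $\mathbf{P}(\Omega_0)=1$, $w=(w_1,\dots,w_N)\colon\Omega_0\to\mathbb{R}^N$ is measurable with $w(\omega)$ a positive vector and $\|w(\omega)\|=1$ for all $\omega\in\Omega_0$, and $\rho\colon\Omega_0\to(0,\infty)$ satisfies $S(\omega)w(\omega)=\rho(\omega)w(\theta\omega)$ for all $\omega\in\Omega_0$ (such objects exist, with $\lim_{n\to\infty}\frac1n\ln\|S^{(n)}(\omega)w(\omega)\|$ equal to the top Lyapunov exponent on $\Omega_0$). Then for each $1\le i\le N$ the function $\ln w_i(\cdot)$ is bounded uniformly on $\Omega_0$.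
   Context: $\|\cdot\|$ denotes the Euclidean norm; a positive vector has all coordinates positive; $S^{(n)}(\omega)=S(\theta^{n-1}\omega)\cdots S(\omega)$. *)

(* Defs.v *)
From HB Require Import structures.
From mathcomp Require Import all_boot all_order all_algebra.
From mathcomp Require Import all_classical all_reals all_analysis.
Set Implicit Arguments. Unset Strict Implicit. Unset Printing Implicit Defensive.
Import Order.TTheory GRing.Theory Num.Theory.
Local Open Scope classical_set_scope.
Local Open Scope ring_scope.

Definition mp_automorphism d (T : measurableType d) (R : realType)
    (P : probability T R) (theta : T -> T) : Prop :=
  exists theta_inv : T -> T,
    [/\ cancel theta theta_inv, cancel theta_inv theta,
        measurable_fun setT theta, measurable_fun setT theta_inv &
        forall E, measurable E -> P (theta @^-1` E) = P E].

Definition ergodic d (T : measurableType d) (R : realType)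
    (P : probability T R) (theta : T -> T) : Prop :=
  forall E, measurable E -> theta @^-1` E = E -> P E = 0%E \/ P E = 1%E.

Definition lnplus (R : realType) (x : R) : R := Num.max (ln x) 0.

Definition enorm (R : realType) (N : nat) (v : 'cV[R]_N) : R :=
  Num.sqrt (\sum_(i < N) v i 0 ^+ 2).

(* Main.v *)
Require Import Defs.
From HB Require Import structures.
From mathcomp Require Import all_boot all_order all_algebra.
From mathcomp Require Import all_classical all_reals all_analysis.
From mathcomp Require Import ring lra.
Import Order.TTheory GRing.Theory Num.Theory.
Local Open Scope classical_set_scope.
Local Open Scope ring_scope.

Theorem lemma3p2 (R : realType) (dsp : measure_display) (T : measurableType dsp)
  (P : probability T R) (theta : T -> T)
  (N : nat) (A : 'M[R]_N) (dg : 'I_N -> T -> R)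
  (Omega0 : set T) (w : T -> 'cV[R]_N) (rho : T -> R) :
  mp_automorphism P theta ->
  ergodic P theta ->
  (forall i j, 0 < A i j) ->
  (forall i, measurable_fun setT (dg i)) ->
  (forall i x, 0 < dg i x) ->
  P.-integrable setT (fun x => (lnplus (\big[Num.max/0]_(i < N) dg i x))%:E) ->
  measurable Omega0 ->
  theta @` Omega0 = Omega0 ->
  P Omega0 = 1%E ->
  (forall i, measurable_fun Omega0 (fun x => w x i 0)) ->
  (forall x, Omega0 x -> forall i, 0 < w x i 0) ->
  (forall x, Omega0 x -> enorm (w x) = 1) ->
  (forall x, Omega0 x -> 0 < rho x) ->
  (forall x, Omega0 x ->
     (A *m diag_mx (\row_i dg i x)) *m w x = rho x *: w (theta x)) ->
  forall i : 'I_N, exists C : R, forall x, Omega0 x -> `|ln (w x i 0)| <= C.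
Proof.
move=> _ _ Apos _ dpos _ _ thO _ _ wpos wn rpos eig i.
pose m := \big[Num.min/A i i]_(p : 'I_N * 'I_N) A p.1 p.2.
pose M := \big[Num.max/A i i]_(p : 'I_N * 'I_N) A p.1 p.2.
have m0 : 0 < m.
  rewrite /m; elim/big_ind: _ => //; first by move=> a b ha hb; rewrite lt_min ha hb.
have mle : forall j k, m <= A j k.
  by move=> j k; exact: (bigmin_le (A i i) (j, k) (fun p => A p.1 p.2)).
have Mge : forall j k, A j k <= M.
  by move=> j k; exact: (le_bigmax (A i i) (fun p => A p.1 p.2) (j, k)).
have M0 : 0 < M by apply: lt_le_trans (Mge i i).
have N0 : (0 < N)%N := leq_ltn_trans (leq0n i) (ltn_ord i).
pose L := m ^+ 2 / (N%:R * M ^+ 2).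
have L0 : 0 < L by rewrite divr_gt0 ?exprn_gt0 // mulr_gt0 ?exprn_gt0 // ltr0n.
have key : forall y, Omega0 y -> L <= w y i 0 /\ w y i 0 <= 1.
  move=> y Oy.
  have : Omega0 y by [].
  rewrite -thO => -[x Ox <-].
  have Oy' : Omega0 (theta x) by rewrite -thO; exists x.
  set u := w (theta x).
  have ent : forall k, rho x * u k 0 = \sum_j A k j * (dg j x * w x j 0).
    move=> k; have := congr1 (fun B : 'M[R]_(N,1) => B k 0) (eig x Ox).
    rewrite -mulmxA mul_diag_mx !mxE => <-.
    by apply: eq_bigr => j _; rewrite !mxE.
  pose s := \sum_j (dg j x * w x j 0).
  have lo : m * s <= rho x * u i 0.
    rewrite ent /s mulr_sumr; apply: ler_sum => j _.
    by rewrite ler_pM2r ?mulr_gt0 ?dpos ?wpos.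
  have hi : forall k, rho x * u k 0 <= M * s.
    move=> k; rewrite ent /s mulr_sumr; apply: ler_sum => j _.
    by rewrite ler_pM2r ?mulr_gt0 ?dpos ?wpos.
  have rx := rpos x Ox.
  have cmp : forall k, m * u k 0 <= M * u i 0.
    move=> k; rewrite -(ler_pM2l rx) mulrCA (mulrCA _ M).
    apply: (@le_trans _ _ (m * (M * s))); first by rewrite ler_pM2l.
    by rewrite [m * (M * s)]mulrCA ler_pM2l.
  have ui := wpos _ Oy' i.
  have sq1 : \sum_k u k 0 ^+ 2 = 1.
    have := wn _ Oy'; rewrite /enorm -/u => h.
    rewrite -(@sqr_sqrtr _ (\sum_k u k 0 ^+ 2)) ?h ?expr1n //.
    by apply: sumr_ge0 => k _; rewrite sqr_ge0.
  have ule : u i 0 ^+ 2 <= 1.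
    rewrite -sq1 (bigD1 i) //= lerDl; apply: sumr_ge0 => k _; exact: sqr_ge0.
  have u1 : u i 0 <= 1 by nra.
  split => //.
  pose v := M * u i 0 / m.
  have hv : forall k, u k 0 ^+ 2 <= v ^+ 2.
    move=> k; have uk := wpos _ Oy' k.
    have : u k 0 <= v by rewrite /v ler_pdivlMr // mulrC cmp.
    move=> h; rewrite ler_sqr ?nnegrE //; [exact: ltW|].
    by rewrite /v divr_ge0 ?mulr_ge0 // ltW.
  have sv : 1 <= N%:R * v ^+ 2.
    apply: (@le_trans _ _ (\sum_k u k 0 ^+ 2)); first by rewrite sq1.
    apply: (@le_trans _ _ (\sum_(k < N) v ^+ 2)).
      by apply: ler_sum => k _; exact: hv.
    by rewrite sumr_const card_ord mulr_natl.
  have hL : L <= u i 0 ^+ 2.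
    rewrite /L ler_pdivrMr ?mulr_gt0 ?exprn_gt0 ?ltr0n //.
    have -> : u i 0 ^+ 2 * (N%:R * M ^+ 2) = m ^+ 2 * (N%:R * v ^+ 2).
      rewrite /v; field; exact: lt0r_neq0.
    by rewrite -[leLHS]mulr1 ler_pM2l ?exprn_gt0.
  apply: le_trans hL _; nra.
exists (- ln L) => y Oy.
have [h1 h2] := key y Oy.
have wy := wpos y Oy i.
rewrite ler0_norm ?ln_le0 // lerN2 ler_ln //; by rewrite posrE.
Qed.
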